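(* Let $\mathsf{V}$ be the subvariety of $V(\mathsf{BCA})$ axiomatised, relative to $V(\mathsf{BCA})$, by $J_2\neg x\approx\neg J_2x$. Then every $\mathbf{A}\in\mathsf{V}$ embeds into a direct product $\mathbf{B}\times\mathbf{C}$ for some $\mathbf{B}\in\mathsf{BA}$ and some $\mathbf{C}\in\mathsf{SL}$.
   Context: $\mathbf{WK}^e$ is the three-element algebra on $\{0,\tfrac12,1\}$ of type $\langle\wedge,\vee,\neg,J_2,0,1\rangle$. Its operations are: - $\neg$ swaps $0,1$ and fixes $\tfrac12$; - $\wedge,\vee$ are Boolean on $\{0,1\}$ and return $\tfrac12$ if some argument is $\tfrac12$; - $J_2(1)=1$ and $J_2(\tfrac12)=J_2(0)=0$. $\mathsf{BCA}=ISP(\mathbf{WK}^e)$ and $V(\mathsf{BCA})=HSP(\mathbf{WK}^e)$. $\mathsf{BA}$ is the subvariety of $V(\mathsf{BCA})$ axiomatised relative to it by $J_2x\approx x$. $\mathsf{SL}$ is the subvariety axiomatised relative to it by $J_2x\approx1$. *)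

(* Defs.v *)
Inductive wk : Type := W0 | Wh | W1.

Definition wk_neg (x : wk) : wk :=
  match x with W0 => W1 | Wh => Wh | W1 => W0 end.

Definition wk_meet (x y : wk) : wk :=
  match x, y with
  | Wh, _ => Wh | _, Wh => Wh
  | W1, W1 => W1
  | _, _ => W0
  end.

Definition wk_join (x y : wk) : wk :=
  match x, y with
  | Wh, _ => Wh | _, Wh => Wh
  | W0, W0 => W0
  | _, _ => W1
  end.

Definition wk_J2 (x : wk) : wk :=
  match x with W1 => W1 | _ => W0 end.

Record alg : Type := Alg {
  car :> Type;
  a_meet : car -> car -> car;
  a_join : car -> car -> car;
  a_neg : car -> car;
  a_J2 : car -> car;
  a_zero : car;
  a_one : car }.

Definition WKe : alg := Alg wk wk_meet wk_join wk_neg wk_J2 W0 W1.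

Definition is_hom (A B : alg) (h : A -> B) : Prop :=
  (forall x y, h (a_meet A x y) = a_meet B (h x) (h y)) /\
  (forall x y, h (a_join A x y) = a_join B (h x) (h y)) /\
  (forall x, h (a_neg A x) = a_neg B (h x)) /\
  (forall x, h (a_J2 A x) = a_J2 B (h x)) /\
  h (a_zero A) = a_zero B /\
  h (a_one A) = a_one B.

Definition embeds (A B : alg) : Prop :=
  exists h : A -> B, is_hom A B h /\ (forall x y, h x = h y -> x = y).

Definition prod_alg (B C : alg) : alg :=
  Alg (B * C)%type
    (fun x y => (a_meet B (fst x) (fst y), a_meet C (snd x) (snd y)))
    (fun x y => (a_join B (fst x) (fst y), a_join C (snd x) (snd y)))
    (fun x => (a_neg B (fst x), a_neg C (snd x)))
    (fun x => (a_J2 B (fst x), a_J2 C (snd x)))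
    (a_zero B, a_zero C)
    (a_one B, a_one C).

Definition wk_power (I : Type) : alg :=
  Alg (I -> wk)
    (fun f g i => wk_meet (f i) (g i))
    (fun f g i => wk_join (f i) (g i))
    (fun f i => wk_neg (f i))
    (fun f i => wk_J2 (f i))
    (fun _ => W0)
    (fun _ => W1).

(* A ∈ HSP(WK^e) = V(BCA): there are a set I, a subuniverse S of (WK^e)^I
   and a surjective homomorphism from the subalgebra on S onto A
   (represented as a map on the whole power that is a homomorphism on S). *)
Definition in_VBCA (A : alg) : Prop :=
  exists (I : Type) (S : (I -> wk) -> Prop) (h : (I -> wk) -> A),
    (forall f g, S f -> S g -> S (a_meet (wk_power I) f g)) /\
    (forall f g, S f -> S g -> S (a_join (wk_power I) f g)) /\
    (forall f, S f -> S (a_neg (wk_power I) f)) /\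
    (forall f, S f -> S (a_J2 (wk_power I) f)) /\
    S (a_zero (wk_power I)) /\
    S (a_one (wk_power I)) /\
    (forall f g, S f -> S g ->
       h (a_meet (wk_power I) f g) = a_meet A (h f) (h g)) /\
    (forall f g, S f -> S g ->
       h (a_join (wk_power I) f g) = a_join A (h f) (h g)) /\
    (forall f, S f -> h (a_neg (wk_power I) f) = a_neg A (h f)) /\
    (forall f, S f -> h (a_J2 (wk_power I) f) = a_J2 A (h f)) /\
    h (a_zero (wk_power I)) = a_zero A /\
    h (a_one (wk_power I)) = a_one A /\
    (forall a : A, exists f, S f /\ h f = a).

Definition in_BA (A : alg) : Prop :=
  in_VBCA A /\ forall x : A, a_J2 A x = x.

Definition in_SL (A : alg) : Prop :=
  in_VBCA A /\ forall x : A, a_J2 A x = a_one A.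

Definition in_V (A : alg) : Prop :=
  in_VBCA A /\ forall x : A, a_J2 A (a_neg A x) = a_neg A (a_J2 A x).

(* Main.v *)
Require Import Defs.
From Stdlib Require Import FunctionalExtensionality ProofIrrelevance.

Inductive tm : Type := TX | TY | T0 | T1 | TM (s u : tm) | TJn (s u : tm) | TN (s : tm) | TJ (s : tm).

Fixpoint ev (A : alg) (x y : A) (t : tm) : A :=
  match t with
  | TX => x | TY => y | T0 => a_zero A | T1 => a_one A
  | TM s u => a_meet A (ev A x y s) (ev A x y u)
  | TJn s u => a_join A (ev A x y s) (ev A x y u)
  | TN s => a_neg A (ev A x y s)
  | TJ s => a_J2 A (ev A x y s)
  end.

Lemma ev_pow I (f g : I -> wk) t i : ev (wk_power I) f g t i = ev WKe (f i) (g i) t.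
Proof.
  induction t; simpl; try reflexivity;
  try (rewrite IHt1, IHt2; reflexivity); rewrite IHt; reflexivity.
Qed.

Lemma ident (A : alg) (HA : in_VBCA A) (x y : A) (t1 t2 : tm) :
  (forall u v : wk, ev WKe u v t1 = ev WKe u v t2) -> ev A x y t1 = ev A x y t2.
Proof.
  intro H.
  destruct HA as (I&S&h&Hm&Hj&Hn&HJ&H0&H1&hm&hj&hn&hJ&h0&h1&hs).
  destruct (hs x) as (f&Sf&<-). destruct (hs y) as (g&Sg&<-).
  assert (key : forall t, S (ev (wk_power I) f g t) /\ h (ev (wk_power I) f g t) = ev A (h f) (h g) t).
  { induction t; cbn [ev]; try tauto.
    - split; [apply Hm; tauto|]. rewrite hm by tauto. f_equal; tauto.
    - split; [apply Hj; tauto|]. rewrite hj by tauto. f_equal; tauto.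
    - split; [apply Hn; tauto|]. rewrite hn by tauto. f_equal; tauto.
    - split; [apply HJ; tauto|]. rewrite hJ by tauto. f_equal; tauto. }
  rewrite <- (proj2 (key t1)), <- (proj2 (key t2)). f_equal.
  apply functional_extensionality; intro i. rewrite !ev_pow. apply H.
Qed.

Ltac reify A x y t :=
  lazymatch constr:((t, x, y)) with
  | (?a, ?a, _) => constr:(TX)
  | (?a, _, ?a) => constr:(TY)
  | _ =>
  lazymatch t with
  | a_meet A ?s ?u => let s' := reify A x y s in let u' := reify A x y u in constr:(TM s' u')
  | a_join A ?s ?u => let s' := reify A x y s in let u' := reify A x y u in constr:(TJn s' u')
  | a_neg A ?s => let s' := reify A x y s in constr:(TN s')
  | a_J2 A ?s => let s' := reify A x y s in constr:(TJ s')
  | a_zero A => constr:(T0)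
  | a_one A => constr:(T1)
  end
  end.

Ltac wk_id A HA x y :=
  lazymatch goal with
  | |- ?l = ?r =>
    let l' := reify A x y l in let r' := reify A x y r in
    exact (ident A HA x y l' r' ltac:(intros [] []; reflexivity))
  end.

Lemma img (A D : alg) (HA : in_VBCA A) (phi : A -> D) :
  is_hom A D phi -> (forall d, exists a, phi a = d) -> in_VBCA D.
Proof.
  intros (pm&pj&pn&pJ&p0&p1) ps.
  destruct HA as (I&S&h&Hm&Hj&Hn&HJ&H0&H1&hm&hj&hn&hJ&h0&h1&hs).
  exists I, S, (fun f => phi (h f)).
  repeat split; auto.
  - intros; rewrite hm by auto; auto.
  - intros; rewrite hj by auto; auto.
  - intros; rewrite hn by auto; auto.
  - intros; rewrite hJ by auto; auto.
  - rewrite h0; auto.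
  - rewrite h1; auto.
  - intro d. destruct (ps d) as (a&<-). destruct (hs a) as (f&Sf&<-). eauto.
Qed.

Lemma sig_eq' (T : Type) (P : T -> Prop) (a b : {x : T | P x}) :
  proj1_sig a = proj1_sig b -> a = b.
Proof. destruct a, b; simpl; intros ->; f_equal; apply proof_irrelevance. Qed.

Section S.
End S.

Lemma JJ (A : alg) (HA : in_VBCA A) (z : A) : a_J2 A (a_J2 A z) = a_J2 A z.
Proof. wk_id A HA z z. Qed.

Lemma OO (A : alg) (HA : in_VBCA A) (z : A) :
  a_join A (a_one A) (a_join A (a_one A) z) = a_join A (a_one A) z.
Proof. wk_id A HA z z. Qed.

Definition bet (A : alg) (HA : in_VBCA A) (z : A) : {x : A | a_J2 A x = x} :=
  exist _ (a_J2 A z) (JJ A HA z).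

Definition gam (A : alg) (HA : in_VBCA A) (z : A) : {x : A | a_join A (a_one A) x = x} :=
  exist _ (a_join A (a_one A) z) (OO A HA z).

Definition Balg (A : alg) (HA : in_VBCA A) : alg :=
  Alg {x : A | a_J2 A x = x}
    (fun x y => bet A HA (a_meet A (proj1_sig x) (proj1_sig y)))
    (fun x y => bet A HA (a_join A (proj1_sig x) (proj1_sig y)))
    (fun x => bet A HA (a_neg A (proj1_sig x)))
    (fun x => x)
    (bet A HA (a_zero A)) (bet A HA (a_one A)).

Definition Calg (A : alg) (HA : in_VBCA A) : alg :=
  Alg {x : A | a_join A (a_one A) x = x}
    (fun x y => gam A HA (a_meet A (proj1_sig x) (proj1_sig y)))
    (fun x y => gam A HA (a_join A (proj1_sig x) (proj1_sig y)))
    (fun x => x)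
    (fun x => gam A HA (a_one A))
    (gam A HA (a_one A)) (gam A HA (a_one A)).

Lemma bet_hom (A : alg) (HA : in_VBCA A)
  (HV : forall x : A, a_J2 A (a_neg A x) = a_neg A (a_J2 A x)) :
  is_hom A (Balg A HA) (bet A HA).
Proof.
  assert (Jj : forall x y, a_J2 A (a_join A x y) = a_join A (a_J2 A x) (a_J2 A y)).
  { intros x y.
    assert (E : a_join A x y = a_neg A (a_meet A (a_neg A x) (a_neg A y))) by wk_id A HA x y.
    rewrite E, HV.
    assert (E2 : a_J2 A (a_meet A (a_neg A x) (a_neg A y)) =
                 a_meet A (a_J2 A (a_neg A x)) (a_J2 A (a_neg A y))) by wk_id A HA x y.
    rewrite E2, !HV. wk_id A HA x y. }
  repeat split; intros; apply sig_eq'; simpl.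
  - wk_id A HA x y.
  - rewrite Jj. wk_id A HA x y.
  - rewrite HV. wk_id A HA x x.
  - apply JJ; auto.
Qed.

Lemma gam_hom (A : alg) (HA : in_VBCA A) : is_hom A (Calg A HA) (gam A HA).
Proof.
  repeat split; intros; apply sig_eq'; simpl.
  - wk_id A HA x y.
  - wk_id A HA x y.
  - wk_id A HA x x.
  - wk_id A HA x x.
  - pose (z := a_zero A). wk_id A HA z z.
Qed.

Theorem theorem4p13 (A : alg) :
  in_V A ->
  exists B C : alg, in_BA B /\ in_SL C /\ embeds A (prod_alg B C).
Proof.
  intros [HA HV].
  exists (Balg A HA), (Calg A HA).
  pose proof (bet_hom A HA HV) as Hb. pose proof (gam_hom A HA) as Hc.
  split; [split|split; [split|]].
  - apply (img A (Balg A HA) HA (bet A HA) Hb).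
    intros [d Hd]. exists d. apply sig_eq'. simpl. exact Hd.
  - reflexivity.
  - apply (img A (Calg A HA) HA (gam A HA) Hc).
    intros [d Hd]. exists d. apply sig_eq'. simpl. exact Hd.
  - reflexivity.
  - exists (fun x => (bet A HA x, gam A HA x)). split.
    + destruct Hb as (bm&bj&bn&bJ&b0&b1), Hc as (cm&cj&cn&cJ&c0&c1).
      repeat split; intros; simpl; f_equal; auto.
    + intros x y E. injection E as E1 E2.
      cbn in E1, E2.
      assert (K : forall z, z = a_join A (a_J2 A z) (a_meet A (a_join A (a_one A) z) (a_zero A))).
      { intro z. wk_id A HA z z. }
      rewrite (K x), (K y), E1, E2. reflexivity.
Qed.
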